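(* In the model described in the context, any available a-audit operation (one that collects the logs of an auditing quorum of $n-f$ storage objects) obtains, for every reader $p_r$ and value $v$ such that $v$ was effectively read by $p_r$ before the audit was invoked, records $\langle p_r,\mathit{label}(v)\rangle$ from at least $\tau-2f$ distinct objects.
   Context: Model. An asynchronous system has client processes (writers, readers, auditors) and $n$ storage objects $o_1,\dots,o_n$. Each $o_k$ is a linearisable loggable read/write register with a log $L_k$ (initially empty). Its operations are: rw-write($b$), which stores block $b$; rw-read(), which returns the current block (or $\perp$) and appends $\langle p_r,\mathit{label}(b)\rangle$ to $L_k$, where $p_r$ is the invoking reader and $\mathit{label}(b)$ identifies the value from which $b$ was derived; and rw-getLog(), which returns $L_k$. A multi-writer multi-reader register over values $\mathbb{V}$ is emulated by information dispersal. An a-write($v$) encodes $v$ into $b_{v_1},\dots,b_{v_n}$ and sends $b_{v_k}$ to $o_k$. Any $\tau$ distinct blocks of $v$ suffice to recover $v$, and fewer do not; $\tau>f$. Reads are fast (one round-trip), and concurrency is unlimited. Faults. At most $f$ storage objects are faulty. A faulty object may crash, omit its block from readers, omit log records from auditors, and report records of nonexistent reads. Correct objects follow the specification. Providing set $P_{p_r,v}$: the set of objects $o_k$ that, in the history, received a write request for $b_{v_k}$ and responded $b_{v_k}$ to a read request of $p_r$. The value $v$ is effectively read by $p_r$ iff $|P_{p_r,v}|\ge\tau$. An a-audit queries objects with rw-getLog; to be available, it uses only the logs returned by an auditing quorum of $n-f$ objects. *)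

(* Defs.v *)
From mathcomp Require Import all_boot.
Set Implicit Arguments. Unset Strict Implicit. Unset Printing Implicit Defensive.

Section Model.
Variables (Reader Value : eqType) (n : nat).

(* The block b_{v_k} of value v destined to object o_k is identified by (v,k). *)
Definition block := (Value * 'I_n)%type.
(* label(b): the value b was derived from; label of bottom is None. *)
Definition label (b : option block) : option Value :=
  if b is Some bb then Some bb.1 else None.
Definition record := (Reader * option Value)%type.

Inductive opkind :=
| OWrite of block
| ORead of Reader
| OGetLog.

Inductive response :=
| RAck
| RBlock of option block        (* result of rw-read (None = bottom) *)
| RLog of seq record.

(* An operation applied to an object: its kind, its (real-time) invocation
   time, linearization point and response time, and its response
   (None = no response: pending, or omitted by a crashed/faulty object). *)
Record op := Op { kind : opkind; inv : nat; lin : nat; rsp : nat;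
                  result : option response }.

Definition state := (option block * seq record)%type.
Definition step_resp (st : state) (k : opkind) : response :=
  match k with
  | OWrite _ => RAck
  | ORead _ => RBlock st.1
  | OGetLog => RLog st.2
  end.
Definition step (st : state) (k : opkind) : state :=
  match k with
  | OWrite b => (Some b, st.2)
  | ORead p => (st.1, rcons st.2 (p, label st.1))
  | OGetLog => st
  end.
Fixpoint run (st : state) (s : seq op) : Prop :=
  match s with
  | [::] => True
  | o :: s' =>
      (forall r, result o = Some r -> r = step_resp st (kind o))
      /\ run (step st (kind o)) s'
  end.

Definition well_timed (o : op) : bool :=
  (inv o <= lin o) && (if result o is Some _ then lin o <= rsp o else true).

(* The history of a correct (linearisable, specification-abiding) object:
   its operations listed in linearization order (strictly increasing
   linearization points, each inside the operation's real-time interval),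
   with responses given by the sequential specification from the initial
   state (bottom, empty log). *)
Definition correct_history (s : seq op) : Prop :=
  [/\ sorted (fun a b => lin a < lin b) s, all well_timed s & run (None, [::]) s].

Definition history := 'I_n -> seq op.

Definition is_write_of (v : Value) (k : 'I_n) (o : op) : bool :=
  if kind o is OWrite b then b == (v, k) else false.

Definition is_read_resp (p : Reader) (v : Value) (k : 'I_n) (t : nat) (o : op) : bool :=
  match kind o, result o with
  | ORead q, Some (RBlock (Some b)) => [&& q == p, b == (v, k) & rsp o < t]
  | _, _ => false
  end.

Definition providing_set (h : history) (p : Reader) (v : Value) (t : nat)
  : {set 'I_n} :=
  [set k | has (is_write_of v k) (h k) && has (is_read_resp p v k t) (h k)].

Definition effectively_read_before (tau : nat) (h : history) p v t : Prop :=
  tau <= #|providing_set h p v t|.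

Definition is_log_resp (l : seq record) (o : op) : bool :=
  if result o is Some (RLog l') then l' == l else false.

(* An a-audit invoked at time t0 that uses the logs L k returned by the
   objects k of the auditing quorum Q (each obtained by an rw-getLog
   invoked on o_k no earlier than t0). *)
Definition audit_uses (h : history) (t0 : nat) (Q : {set 'I_n})
  (L : 'I_n -> seq record) : Prop :=
  forall k, k \in Q -> has (fun o => (t0 <= inv o) && is_log_resp (L k) o) (h k).

End Model.

(* Main.v *)
Require Import Defs.
From mathcomp Require Import all_boot.
From mathcomp Require Import zify.
Set Implicit Arguments.
Unset Strict Implicit.

Lemma hasIn (T : Type) (a : pred T) (s : seq T) :
  has a s -> exists x, List.In x s /\ a x.
Proof.
elim: s => [//|y s IH] /= /orP [H|H]; first by exists y; split; [left|].
by have [x [Hx Ha]] := IH H; exists x; split; [right|].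
Qed.

Lemma pathIn (T : Type) (r : T -> T -> bool) a s :
  (forall x y z, r x y -> r y z -> r x z) ->
  path r a s -> forall x, List.In x s -> r a x.
Proof.
move=> Htr; elim: s a => [//|y s IH] a /= /andP [Hay Hp] x [<-//|Hx].
exact: Htr Hay (IH _ Hp _ Hx).
Qed.

Lemma allIn (T : Type) (a : pred T) (s : seq T) x :
  all a s -> List.In x s -> a x.
Proof.
elim: s => [//|y s IH] /= /andP [Hy Hs] [<-//|Hx]; exact: IH.
Qed.

Section Aux.
Variables (Reader Value : eqType) (n : nat).

Lemma logA (s : seq (op Reader Value n)) st o' l :
  run st s -> List.In o' s -> result o' = Some (RLog n l) -> {subset st.2 <= l}.
Proof.
elim: s st => [//|a s IH] st /= [Ha Hr] [<-|Hin] Hres.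
  by have := Ha _ Hres; case: (kind a) => /= [b|q|] // [->].
move=> x Hx; apply: (IH _ Hr Hin Hres).
by case: (kind a) => /= [b|q|] //; rewrite ?mem_rcons ?inE ?Hx ?orbT.
Qed.

Lemma logB (s : seq (op Reader Value n)) st o o' p b l :
  run st s -> sorted (fun a b => lin a < lin b) s -> List.In o s -> List.In o' s ->
  lin o < lin o' -> kind o = ORead Value n p -> result o = Some (RBlock Reader (Some b)) ->
  result o' = Some (RLog n l) -> (p, Some b.1) \in l.
Proof.
elim: s st => [//|a s IH] st /= [Ha Hr] Hs.
have Hall : forall x, List.In x s -> lin a < lin x.
  by apply: pathIn Hs => x y z; apply: ltn_trans.
move=> [Eo|Hin] [Eo'|Hin'] Hlt Hk Hro Hro'.
- by rewrite -Eo -Eo' ltnn in Hlt.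
- subst o. have := Ha _ Hro; rewrite Hk /= => [[Hst]].
  have HH := logA Hr Hin' Hro'; apply: HH; rewrite Hk /= -Hst /= mem_rcons inE eqxx //.
- subst o'. have := Hall _ Hin => H. by move: (ltn_trans H Hlt); rewrite ltnn.
- exact: (IH _ Hr (path_sorted Hs) Hin Hin' Hlt Hk Hro Hro').
Qed.

End Aux.

Theorem lemma1 (Reader Value : eqType) (n f tau : nat)
  (h : history Reader Value n) (F : {set 'I_n})
  (t0 : nat) (Q : {set 'I_n}) (L : 'I_n -> seq (record Reader Value)) :
  f < tau ->
  #|F| <= f ->
  (forall k, k \notin F -> correct_history (h k)) ->
  #|Q| = n - f ->
  audit_uses h t0 Q L ->
  forall (p : Reader) (v : Value),
    effectively_read_before tau h p v t0 ->
    tau - 2 * f <= #|[set k in Q | (p, Some v) \in L k]|.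
Proof.
move=> Hft HF Hcor HQ Haud p v.
rewrite /effectively_read_before.
set P := providing_set h p v t0 => HP.
have Hsub : (P :&: Q) :\: F \subset [set k in Q | (p, Some v) \in L k].
  apply/subsetP => k; rewrite !inE => /andP [HkF /andP [HkP HkQ]].
  rewrite HkQ /=.
  move: HkP => /andP [_ /hasIn [o [Ho Hrd]]].
  have /hasIn [o' [Ho' /andP [Hinv Hlog]]] := Haud k HkQ.
  have [Hsort Hwt Hrun] := Hcor k HkF.
  move: Hrd; rewrite /is_read_resp.
  case Hk: (kind o) => [b|q|] //.
  case Hr: (result o) => [[| [bb|] |]|] //.
  move=> /and3P [/eqP Hq /eqP Hbb Hrsp]; subst q bb.
  move: Hlog; rewrite /is_log_resp; case Hr': (result o') => [[| |l']|] // /eqP Hl.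
  subst l'.
  have /andP [_ W] := allIn Hwt Ho; rewrite Hr in W.
  have /andP [W' _] := allIn Hwt Ho'.
  have Hlt : lin o < lin o'.
    apply: (leq_ltn_trans W); apply: (leq_trans Hrsp); exact: leq_trans Hinv W'.
  exact: (logB Hrun Hsort Ho Ho' Hlt Hk Hr Hr').
apply: leq_trans (subset_leq_card Hsub).
have E1 := cardsID Q P.
have E2 := cardsID F (P :&: Q).
have C1 : #|P :\: Q| <= #|~: Q| by apply: subset_leq_card; apply/subsetP => x; rewrite !inE => /andP [].
have C2 : #|(P :&: Q) :&: F| <= #|F| by apply: subset_leq_card; apply: subsetIr.
rewrite [#|~: Q|]cardsCs card_ord setCK HQ in C1.

lia.
Qed.
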